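(* The Krull dimension of $\mathcal{A}(\bm{p})$ is infinite: for every $N\in\mathbb{N}$ there is a strictly decreasing chain $P_{N+1}\subsetneq P_N\subsetneq\cdots\subsetneq P_1$ of proper prime ideals of $\mathcal{A}(\bm{p})$.
   Context: Fix $\bm{p}:\mathbb{N}_0\to(0,\infty)$ with $\lim_{n\to\infty}\bm{p}(n)^{1/n}=\infty$. For an entire function $f$ write $f(z)=\sum_{n\ge0}\widehat f(n)z^n$. $\mathcal{A}(\bm{p})$ is the set of entire functions $f$ with $\sup_{n\ge 0}\bm{p}(n)|\widehat f(n)|<\infty$, with pointwise addition and scalar multiplication and the weighted Hadamard product $(f\ast g)(z)=\sum_{n\ge0}\bm{p}(n)\widehat f(n)\widehat g(n)z^n$; it is a commutative unital ring. The Krull dimension of a commutative ring is the supremum of lengths of chains of distinct proper prime ideals. *)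

(* Defs.v *)
From HB Require Import structures.
From mathcomp Require Import all_boot all_order all_algebra.
From mathcomp Require Import complex.
From mathcomp Require Import all_classical all_reals all_analysis.
Set Implicit Arguments. Unset Strict Implicit. Unset Printing Implicit Defensive.
Import Order.TTheory GRing.Theory Num.Theory ComplexField.
Local Open Scope ring_scope.
Local Open Scope classical_set_scope.

(* An entire function f is identified with its Taylor coefficient sequence
   n |-> \hat f(n).  Elements of A(p) are the coefficient sequences a with
   sup_n p(n) |a(n)| < oo (such sequences automatically define entire
   functions since p(n)^(1/n) -> oo). *)

Section Apdef.
Variable R : realType.

Definition admissible_weight (p : nat -> R) : Prop :=
  (forall n, 0 < p n) /\
  ((fun n : nat => powR (p n) (n%:R)^-1) @ \oo --> +oo).

Definition inA (p : nat -> R) (a : nat -> R[i]) : Prop :=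
  exists M : R, forall n, p n * Normc.normc (a n) <= M.

Definition Azero : nat -> R[i] := fun _ => 0.
Definition Aadd (a b : nat -> R[i]) : nat -> R[i] := fun n => a n + b n.
Definition Aopp (a : nat -> R[i]) : nat -> R[i] := fun n => - a n.
Definition Amul (p : nat -> R) (a b : nat -> R[i]) : nat -> R[i] :=
  fun n => ((p n)%:C)%C * a n * b n.

Definition is_ideal (p : nat -> R) (I : set (nat -> R[i])) : Prop :=
  [/\ (forall a, I a -> inA p a),
      I Azero,
      (forall a b, I a -> I b -> I (Aadd a b)),
      (forall a, I a -> I (Aopp a)) &
      (forall r a, inA p r -> I a -> I (Amul p r a))].

Definition is_proper_ideal (p : nat -> R) (I : set (nat -> R[i])) : Prop :=
  is_ideal p I /\ exists a, inA p a /\ ~ I a.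

Definition is_prime_ideal (p : nat -> R) (I : set (nat -> R[i])) : Prop :=
  is_proper_ideal p I /\
  forall a b, inA p a -> inA p b -> I (Amul p a b) -> I a \/ I b.

Definition strict_subset (I J : set (nat -> R[i])) : Prop :=
  I `<=` J /\ exists a, J a /\ ~ I a.

End Apdef.

(* Main.v *)
Require Import Defs.
From HB Require Import structures.
From mathcomp Require Import all_boot all_order all_algebra.
From mathcomp Require Import complex.
From mathcomp Require Import all_classical all_reals all_analysis.
Import Order.TTheory GRing.Theory Num.Theory.
Local Open Scope ring_scope.
Local Open Scope classical_set_scope.

Lemma normcC (R : realType) (x : R) : Normc.normc (x%:C)%C = `|x|.
Proof. by rewrite /Normc.normc /= expr0n addr0 sqrtr_sqr. Qed.

Section Work.
Variable R : realType.
Variable p : nat -> R.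
Hypothesis hp0 : forall n, 0 < p n.
Variable U : set_system nat.
Hypothesis UF : UltraFilter U.

Let h : R := 2^-1.
Lemma h_gt0 : 0 < h. Proof. by rewrite /h invr_gt0. Qed.
Lemma h_lt1 : h < 1. Proof. by rewrite /h invf_lt1 // ltr1n. Qed.
Lemma h2 : 2 * h = 1. Proof. by rewrite /h divff. Qed.

Lemma pow2_bound (M : R) : exists j, (0 < j)%N /\ M * h ^+ j <= 1.
Proof.
have [j /andP[_ hj]] := unstable.leq_ltn_expn (Num.Def.truncn M).
exists j.+1; split => //.
have HM : M <= 2 ^+ j.+1.
  apply: ltW; apply: (lt_le_trans (truncnS_gt M)).
  by rewrite -natrX ler_nat ltnW.
apply: le_trans (_ : 2 ^+ j.+1 * h ^+ j.+1 <= 1).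
  by rewrite ler_wpM2r // exprn_ge0 // ltW // h_gt0.
by rewrite -exprMn h2 expr1n.
Qed.

Definition nrm (a : nat -> R[i]) n := p n * Normc.normc (a n).

Lemma normc_ge0 (z : R[i]) : 0 <= Normc.normc z.
Proof. by case: z => x y; rewrite /Normc.normc sqrtr_ge0. Qed.

Lemma nrm_ge0 a n : 0 <= nrm a n.
Proof. by rewrite /nrm mulr_ge0 ?normc_ge0 // ltW. Qed.

Lemma nrm_add a b n : nrm (Aadd a b) n <= nrm a n + nrm b n.
Proof. by rewrite /nrm /Aadd -mulrDr; apply: ler_wpM2l; [exact: ltW|exact: le_normcD]. Qed.

Lemma nrm_opp a n : nrm (Aopp a) n = nrm a n.
Proof. by rewrite /nrm /Aopp normcN. Qed.

Lemma nrm_mul a b n : nrm (Amul p a b) n = nrm a n * nrm b n.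
Proof.
rewrite /nrm /Amul !Normc.normcM normcC gtr0_norm //.
by rewrite !mulrA; congr (_ * _); rewrite mulrAC.
Qed.

Lemma nrm0 n : nrm (@Azero R) n = 0.
Proof. by rewrite /nrm /Azero Normc.normc0 mulr0. Qed.

Definition Pk (d : nat -> R) (a : nat -> R[i]) : Prop :=
  inA p a /\ forall m, U [set n | nrm a n <= d n ^+ m].

Lemma Uex {A : set nat} : U A -> exists n, A n.
Proof. by move=> UA; apply: (@filter_ex _ U (@ultra_proper _ _ UF) A UA). Qed.

Lemma Pk_prime (d : nat -> R) : (forall n, 0 < d n <= h) -> is_prime_ideal p (Pk d).
Proof.
move=> hd.
have d0 n : 0 <= d n by case/andP: (hd n) => /ltW.
have dh n : d n <= h by case/andP: (hd n).
split; [split; [split|]|].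
- by move=> a [].
- split; first by exists 0 => n; have := nrm0 n; rewrite /nrm => ->.
  by move=> m; apply: filterS (@filterT _ U _) => n _; rewrite /= nrm0 exprn_ge0.
- move=> a b [[Ma hMa] ha] [[Mb hMb] hb]; split.
    exists (Ma + Mb) => n; apply: le_trans (nrm_add a b n) _.
    exact: lerD (hMa n) (hMb n).
  move=> m; apply: filterS (filterI (ha m.+1) (hb m.+1)) => n [/= Ha Hb].
  apply: le_trans (nrm_add a b n) _; apply: le_trans (lerD Ha Hb) _.
  rewrite -mulr2n -mulr_natr exprS mulrAC -mulrA mulrA.
  apply: ler_piMl; first by rewrite exprn_ge0.
  apply: le_trans (_ : h * 2 <= 1); first by rewrite ler_wpM2r.
  by rewrite mulrC h2.
- move=> a [[Ma hMa] ha]; split.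
    by exists Ma => n; have := nrm_opp a n; rewrite /nrm => ->; exact: hMa.
  by move=> m; apply: filterS (ha m) => n /=; rewrite nrm_opp.
- move=> r a [M hM] [[Ma hMa] ha].
  have M0 : 0 <= M by apply: le_trans (hM 0%N); exact: (nrm_ge0 r 0).
  split.
    exists (M * Ma) => n; have := nrm_mul r a n; rewrite {1}/nrm => ->.
    by apply: ler_pM; rewrite ?nrm_ge0 //; [exact: hM|exact: hMa].
  move=> m; have [j [j0 hj]] := pow2_bound M.
  apply: filterS (ha (m + j)%N) => n /= Han; rewrite nrm_mul.
  apply: le_trans (_ : M * d n ^+ (m + j) <= _).
    by apply: ler_pM; rewrite ?nrm_ge0 //; exact: hM.
  rewrite exprD mulrCA ler_piMr ?exprn_ge0 //.
  apply: le_trans hj; rewrite ler_wpM2l //.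
  rewrite ler_pXn2r ?nnegrE ?d0 ?dh //; exact: ltW (h_gt0).
- exists (fun n => ((p n)^-1)%:C%C); split.
    exists 1 => n; rewrite normcC gtr0_norm ?invr_gt0 // divff //.
    exact: lt0r_neq0.
  move=> [_ /(_ 1%N) H1]; have [n /=] := Uex H1.
  rewrite /nrm normcC gtr0_norm ?invr_gt0 // divff ?lt0r_neq0 // expr1 => H.
  by have := le_trans H (dh n); rewrite leNgt h_lt1.
- move=> a b ha hb [_ hab].
  have [Pa|nPa] := pselect (Pk d a); first by left.
  have [Pb|nPb] := pselect (Pk d b); first by right.
  exfalso.
  have [m1 Hm1] : exists m, ~ U [set n | nrm a n <= d n ^+ m].
    by apply: contrapT => H; apply: nPa; split => // m; apply: contrapT => H'; apply: H; exists m.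
  have [m2 Hm2] : exists m, ~ U [set n | nrm b n <= d n ^+ m].
    by apply: contrapT => H; apply: nPb; split => // m; apply: contrapT => H'; apply: H; exists m.
  have [|A1] := in_ultra_setVsetC [set n | nrm a n <= d n ^+ m1] UF; first by [].
  have [|B1] := in_ultra_setVsetC [set n | nrm b n <= d n ^+ m2] UF; first by [].
  have [n [[/= /negP Hn1 /negP Hn2] Hn3]] := Uex (filterI (filterI A1 B1) (hab (m1 + m2)%N)).
  rewrite -ltNge in Hn1; rewrite -ltNge in Hn2.
  move: Hn3; rewrite /= nrm_mul exprD; apply/negP; rewrite -ltNge.
  by apply: ltr_pM => //; rewrite exprn_ge0.
Qed.

Lemma Pk_chain (d d1 : nat -> R) : (forall n, 0 < d n <= h) ->
  (forall n, 0 < d1 n <= h) -> (forall m, U [set n | d1 n <= d n ^+ m]) ->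
  strict_subset (Pk d1) (Pk d).
Proof.
move=> hd hd1 hdd; split.
- move=> a [ha H]; split=> // m; apply: filterS (filterI (H 1%N) (hdd m)) => n [/= H1 H2].
  by rewrite expr1 in H1; exact: le_trans H1 H2.
- exists (fun n => (d1 n / p n)%:C%C).
  have E n : nrm (fun n => (d1 n / p n)%:C%C) n = d1 n.
    have [d10 _] := andP (hd1 n).
    rewrite /nrm normcC gtr0_norm; first by rewrite mulrC divfK // lt0r_neq0.
    by rewrite divr_gt0.
  split; [split|].
  + by exists h => n; have := E n; rewrite /nrm => ->; case/andP: (hd1 n).
  + by move=> m; apply: filterS (hdd m) => n /=; rewrite E.
  + move=> [_ /(_ 2%N) H2]; have [n /=] := Uex H2; rewrite E expr2.
    case/andP: (hd1 n) => d10 d1h; rewrite ler_pMr // => H.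
    by have := le_trans H d1h; rewrite leNgt h_lt1.
Qed.

End Work.

From mathcomp Require Import zify.

Definition dl (R : realType) (k n : nat) : R := (2^-1) ^+ (n ^ k).+1.

Lemma dl_bnd (R : realType) k n : 0 < dl R k n <= 2^-1.
Proof.
rewrite /dl exprn_gt0 ?invr_gt0 //= ler_iXnr // ?invr_ge0 //.
by rewrite invf_le1 // ler1n.
Qed.

Theorem mainTheorem13 (R : realType) (p : nat -> R) (hp : admissible_weight p)
  (N : nat) :
  exists P : nat -> set (nat -> R[i]),
    (forall k, (1 <= k <= N.+1)%N -> is_prime_ideal p (P k)) /\
    (forall k, (1 <= k <= N)%N -> strict_subset (P k.+1) (P k)).
Proof.
have hp0 := hp.1.
have [U [UF sub]] := ultraFilterLemma (@eventually_filter).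
exists (fun k => @Pk R p U (dl R k)); split.
  by move=> k _; apply: Pk_prime => // n; exact: dl_bnd.
move=> k _; apply: Pk_chain => //; try exact: dl_bnd.
move=> m; apply: sub; exists (2 * m).+1 => // n /= hn.
rewrite /dl -exprM; apply: ler_wiXn2l.
- by rewrite invr_ge0.
- by rewrite invf_le1 // ler1n.
have : (0 < n ^ k)%N by rewrite expn_gt0; apply/orP; left; lia.
rewrite expnS; nia.
Qed.
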